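(* Let $(X,d,f)$ be a TDS. If $\widetilde h_{top}(f,X)=h_{top}(f,X)$, then $$h_{top}(f,X)=\lim_{\varepsilon\to0}\lim_{\alpha\to0}h^\alpha_{top}(f,X,\varepsilon)=\sup_{\varepsilon>0}\inf_{\alpha>0}h^\alpha_{top}(f,X,\varepsilon).$$
   Context: A TDS $(X,d,f)$: compact metric space and continuous $f$; $h_{top}(f,X)$ is the classical topological entropy. $d_n^\alpha(x,y)=\max_{0\le i\le n-1}e^{\alpha i}d(f^ix,f^iy)$; $r_n(f,\alpha,X,\varepsilon)$ is the minimal cardinality of a set $E$ such that every $x\in X$ has $y\in E$ with $d_n^\alpha(x,y)<\varepsilon$; $h^\alpha_{top}(f,X,\varepsilon)=\limsup_{n\to\infty}\frac1n\log r_n(f,\alpha,X,\varepsilon)$. Neutralized topological entropy: $B_n(x,r)=\{y:d(f^jx,f^jy)<r,\ 0\le j\le n-1\}$; $r_n(X,e^{-n\varepsilon})$ is the smallest number of balls $B_n(x,e^{-n\varepsilon})$ needed to cover $X$; $\widetilde h_{top}(f,X,\varepsilon)=\limsup_{n\to\infty}\frac1n\log r_n(X,e^{-n\varepsilon})$ and $\widetilde h_{top}(f,X)=\lim_{\varepsilon\to0}\widetilde h_{top}(f,X,\varepsilon)$. *)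

(* Defs.v *)
From HB Require Import structures.
From mathcomp Require Import all_boot all_order all_algebra.
From mathcomp Require Import all_classical all_reals all_analysis.
Set Implicit Arguments. Unset Strict Implicit. Unset Printing Implicit Defensive.
Import Order.TTheory GRing.Theory Num.Theory.
Import numFieldNormedType.Exports.
Local Open Scope classical_set_scope.
Local Open Scope ring_scope.

Section Entropies.
Context {R : realType} {X : metricType R}.
Let d := @mdist R X.

(* d_n^alpha(x,y) = max_{0<=i<=n-1} e^{alpha i} d(f^i x, f^i y)
   (the empty max for n = 0 is 0) *)
Definition dist_alpha (f : X -> X) (alpha : R) (n : nat) (x y : X) : R :=
  \big[Num.max/0]_(i < n) (expR (alpha * i%:R) * d (iter i f x) (iter i f y)).

(* minimal cardinality of a set E such that every x has y in E with
   dn x y < r; +oo if no finite such set exists *)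
Definition min_span (dn : X -> X -> R) (r : R) : \bar R :=
  ereal_inf [set (size s)%:R%:E | s in
     [set s : seq X | forall x : X, exists2 y, y \in s & dn x y < r]].

Definition eln (x : \bar R) : \bar R :=
  match x with
  | r%:E => (ln r)%:E
  | +oo%E => +oo%E
  | -oo%E => -oo%E
  end.

Definition r_alpha (f : X -> X) (alpha : R) (n : nat) (eps : R) : \bar R :=
  min_span (dist_alpha f alpha n) eps.

Definition h_alpha (f : X -> X) (alpha eps : R) : \bar R :=
  limn_esup (fun n : nat => ((n%:R)^-1)%:E * eln (r_alpha f alpha n eps))%E.

(* classical topological entropy (Bowen spanning-set definition,
   Bowen metric d_n = d_n^0) : lim_{eps -> 0} limsup_n (1/n) log r_n(eps) *)
Definition h_top (f : X -> X) : \bar R :=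
  lim ((fun eps : R => h_alpha f 0 eps) @ 0^'+).

Definition bowen_ball (f : X -> X) (n : nat) (x : X) (r : R) : set X :=
  [set y | forall j : nat, (j < n)%N -> d (iter j f x) (iter j f y) < r].

Definition r_neutral (f : X -> X) (n : nat) (eps : R) : \bar R :=
  ereal_inf [set (size s)%:R%:E | s in
     [set s : seq X | forall y : X, exists2 x, x \in s &
                         bowen_ball f n x (expR (- (n%:R * eps))) y]].

Definition h_neutral_eps (f : X -> X) (eps : R) : \bar R :=
  limn_esup (fun n : nat => ((n%:R)^-1)%:E * eln (r_neutral f n eps))%E.

Definition h_neutral (f : X -> X) : \bar R :=
  lim ((fun eps : R => h_neutral_eps f eps) @ 0^'+).

End Entropies.

(* Main.v *)
Require Import Defs.
From HB Require Import structures.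
From mathcomp Require Import all_boot all_order all_algebra.
From mathcomp Require Import all_classical all_reals all_analysis.
From mathcomp Require Import ring lra.
Import Order.TTheory GRing.Theory Num.Theory.
Import numFieldNormedType.Exports.
Local Open Scope classical_set_scope.
Local Open Scope ring_scope.

Section Aux.
Context {R : realType} {X : metricType R} (f : X -> X).

Definition Qn (x : \bar R) := x = 0%E \/ (1 <= x)%E.

Lemma adm_inf (P Q : set (seq X)) : Q `<=` P ->
  (@ereal_inf R [set (size s)%:R%:E | s in P] <=
   @ereal_inf R [set (size s)%:R%:E | s in Q])%E.
Proof.
move=> QP; apply: ereal_inf_le_tmp => _ [s Qs <-]; exists s => //; exact: QP.
Qed.

Lemma inf_nat01 (P : set (seq X)) :
  Qn (@ereal_inf R [set (size s)%:R%:E | s in P]).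
Proof.
set x := ereal_inf _.
case: (leP 1%E x) => hx; [by right|left].
have [_ [s Ps <-] hs] := ereal_inf_lt hx.
move: hs; rewrite lte_fin (_ : 1 = 1%:R)// ltr_nat ltnS leqn0 => /eqP sz.
apply/le_anti/andP; split.
  by apply: ereal_inf_lbound; exists s => //; rewrite sz.
by apply: le_ereal_inf_tmp => _ [t _ <-]; rewrite lee_fin ler0n.
Qed.

Lemma eln_le x y : Qn x -> Qn y -> (x <= y)%E -> (eln x <= eln y)%E.
Proof.
case=> [->|hx].
  rewrite /= ln0 //; case=> [->|hy] _; first by rewrite /= ln0.
  case: y hy => [r||] //= hy; last by rewrite leey.
  by rewrite lee_fin ln_ge0 // -lee_fin.
move=> _ hxy; have hy := le_trans hx hxy.
case: x hx hxy => [r||] // hr; case: y hy => [s||] // hs hrs /=.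
- have r0 : 0 < r by apply: (lt_le_trans ltr01); rewrite -lee_fin.
  have s0 : 0 < s by apply: (lt_le_trans ltr01); rewrite -lee_fin.
  by rewrite lee_fin ler_ln ?posrE // -lee_fin.
all: by rewrite ?leey.
Qed.

Lemma scal_le (n : nat) x y : Qn x -> Qn y -> (x <= y)%E ->
  (((n%:R)^-1)%:E * eln x <= ((n%:R)^-1)%:E * eln y)%E.
Proof.
move=> hx hy hxy; apply: lee_wpmul2l; first by rewrite lee_fin invr_ge0 ler0n.
exact: eln_le.
Qed.

Lemma limn_esup_le_near (u v : (\bar R)^nat) :
  (\forall n \near \oo, (u n <= v n)%E) -> (limn_esup u <= limn_esup v)%E.
Proof.
move=> W; rewrite /limn_esup /limf_esup.
apply: le_ereal_inf_tmp => _ [V hV <-].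
apply: le_trans (_ : ereal_sup (u @` (V `&` (fun n => u n <= v n)%E)) <= _)%E.
  apply: ereal_inf_lbound; exists (V `&` (fun n => u n <= v n)%E) => //.
  exact: filterI.
apply: ge_ereal_sup => _ [n [Vn Wn] <-]; apply: le_trans Wn _.
by apply: ereal_sup_ubound; exists n.
Qed.

Lemma dist_alpha_le a1 a2 n x y : a1 <= a2 ->
  dist_alpha f a1 n x y <= dist_alpha f a2 n x y.
Proof.
move=> a12; rewrite /dist_alpha.
apply: (big_ind2 (fun u v => u <= v)) => //.
  by move=> *; exact: le_max2.
move=> i _; apply: ler_wpM2r; first exact: mdist_ge0.
by rewrite ler_expR; apply: ler_wpM2r => //; rewrite ler0n.
Qed.

Lemma h_alpha_le_a a1 a2 e : a1 <= a2 -> (h_alpha f a1 e <= h_alpha f a2 e)%E.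
Proof.
move=> a12; apply: limn_esup_le_near; apply: nearW => n.
apply: scal_le; [exact: inf_nat01|exact: inf_nat01|].
apply: adm_inf => s hs x; case: (hs x) => y ys hy; exists y => //.
exact: le_lt_trans (dist_alpha_le _ _ n x y a12) hy.
Qed.

Lemma h_alpha_le_e a e1 e2 : e1 <= e2 -> (h_alpha f a e2 <= h_alpha f a e1)%E.
Proof.
move=> e12; apply: limn_esup_le_near; apply: nearW => n.
apply: scal_le; [exact: inf_nat01|exact: inf_nat01|].
apply: adm_inf => s hs x; case: (hs x) => y ys hy; exists y => //.
exact: lt_le_trans hy e12.
Qed.

Lemma h_neutral_le e1 e2 : e1 <= e2 -> (h_neutral_eps f e1 <= h_neutral_eps f e2)%E.
Proof.
move=> e12; apply: limn_esup_le_near; apply: nearW => n.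
apply: scal_le; [exact: inf_nat01|exact: inf_nat01|].
apply: adm_inf => s hs x; case: (hs x) => y ys hy; exists y => // j jn.
apply: lt_le_trans (hy j jn) _.
by rewrite ler_expR lerN2; apply: ler_wpM2l => //; rewrite ler0n.
Qed.

Lemma key a a' e : 0 < a -> a < a' -> 0 < e ->
  (h_alpha f a e <= h_neutral_eps f a')%E.
Proof.
move=> a0 aa' e0; apply: limn_esup_le_near.
set c := - ln e / (a' - a).
have daa : 0 < a' - a by rewrite subr_gt0.
exists (Num.Def.truncn c).+1 => // n /= hn.
have cn : c < n%:R.
  apply: lt_le_trans (truncnS_gt c) _; by rewrite ler_nat.
apply: scal_le; [exact: inf_nat01|exact: inf_nat01|].
apply: adm_inf => s hs x; case: (hs x) => y ys hy; exists y => //.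
rewrite /dist_alpha.
apply: (big_ind (fun v => v < e)) => //.
  by move=> u v hu hv; rewrite gt_max hu hv.
move=> i _; have hi := hy i (ltn_ord i); rewrite metric_sym.
have ein : expR (a * i%:R) <= expR (a * n%:R).
  by rewrite ler_expR ler_pM2l // ler_nat ltnW.
apply: lt_le_trans (_ : expR (a * i%:R) * expR (- (n%:R * a')) <= _).
  by rewrite ltr_pM2l ?expR_gt0.
apply: le_trans (_ : expR (a * n%:R) * expR (- (n%:R * a')) <= _).
  by apply: ler_wpM2r => //; exact: ltW (expR_gt0 _).
have eE : expR (ln e) = e by rewrite lnK // posrE.
rewrite -expRD -[X in _ <= X]eE ler_expR.
move: cn; rewrite /c ltr_pdivrMr // => cn.
have -> : a * n%:R + - (n%:R * a') = - (n%:R * (a' - a)) by ring.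
by rewrite lerNl; exact: ltW.
Qed.

Lemma posE : [set` `]0%R, +oo[] = [set a : R | 0 < a].
Proof. by apply/seteqP; split=> x /=; rewrite in_itv andbT. Qed.

End Aux.

Theorem mainTheorem14 (R : realType) (X : metricType R) (f : X -> X) :
  compact [set: X] -> continuous f ->
  h_neutral f = h_top f ->
  [/\ (forall eps : R, 0 < eps ->
         cvg ((fun alpha : R => h_alpha f alpha eps) @ 0^'+)),
      (fun eps : R => lim ((fun alpha : R => h_alpha f alpha eps) @ 0^'+))
         @ 0^'+ --> h_top f
    & h_top f = ereal_sup [set ereal_inf [set h_alpha f alpha eps | alpha in
                                           [set a : R | 0 < a]]
                          | eps in [set e : R | 0 < e]]].
Proof.
move=> _ _ hN.
have Ha e : (fun alpha : R => h_alpha f alpha e) @ 0^'+ -->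
    ereal_inf [set h_alpha f a e | a in [set a : R | 0 < a]].
  rewrite -posE; apply: (nondecreasing_at_right_cvge (BInfty R false)); first by [].
  by move=> x y _ _ xy; exact: h_alpha_le_a.
have H0 : h_top f = ereal_sup [set h_alpha f 0 e | e in [set e : R | 0 < e]].
  rewrite /h_top; apply: cvg_lim => //; rewrite -posE.
  apply: (nonincreasing_at_right_cvge (BInfty R false)); first by [].
  by move=> x y _ _ xy; exact: h_alpha_le_e.
have Hn : h_neutral f = ereal_inf [set h_neutral_eps f e | e in [set e : R | 0 < e]].
  rewrite /h_neutral; apply: cvg_lim => //; rewrite -posE.
  apply: (nondecreasing_at_right_cvge (BInfty R false)); first by [].
  by move=> x y _ _ xy; exact: h_neutral_le.
set G := fun e => ereal_inf [set h_alpha f a e | a in [set a : R | 0 < a]].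
have HG : h_top f = ereal_sup [set G e | e in [set e : R | 0 < e]].
  apply/eqP; rewrite eq_le; apply/andP; split.
  - rewrite H0; apply: ge_ereal_sup => _ [e e0 <-].
    apply: le_trans (_ : G e <= _)%E.
      by apply: le_ereal_inf_tmp => _ [a a0 <-]; exact: (h_alpha_le_a f _ _ _ (ltW a0)).
    by apply: ereal_sup_ubound; exists e.
  - apply: ge_ereal_sup => _ [e e0 <-]; rewrite -hN Hn.
    apply: le_ereal_inf_tmp => _ [a' a'0 <-].
    have h2 : 0 < a' / 2 by rewrite divr_gt0.
    apply: le_trans (_ : h_alpha f (a' / 2) e <= _)%E.
      by apply: ereal_inf_lbound; exists (a' / 2).
    apply: key => //; lra.
split.
- by move=> e e0; apply/cvg_ex; eexists; exact: Ha.
- have hG : G x @[x --> 0^'+] --> h_top f.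
    rewrite HG -posE; apply: (nonincreasing_at_right_cvge (BInfty R false)); first by [].
    move=> x y _ _ xy; apply: le_ereal_inf_tmp => _ [a a0 <-].
    apply: le_trans _ (h_alpha_le_e f a _ _ xy).
    by apply: ereal_inf_lbound; exists a.
  apply: cvg_trans hG; apply: near_eq_cvg; near=> e.
  by rewrite /G; apply/esym/cvg_lim => //; exact: Ha.
- exact: HG.
Unshelve. all: by end_near.
Qed.
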